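(* Let $S\subseteq\mathcal{D}$. If $S$ is $\mathcal{I}$-minimized (resp. $\mathcal{I}$-maximized), then every probability distribution $\lambda$ on $\mathcal{D}$ supported on $S$ satisfies $C_{11}(\lambda)=\underline{C}_{11}(W_\lambda)$ (resp. $C_{11}(\lambda)=\overline{C}_{11}(W_\lambda)$), where $W_\lambda=\sum_D\lambda_DD$. As a consequence, every nonempty subset of $S$ is also $\mathcal{I}$-minimized (resp. $\mathcal{I}$-maximized).
   Context: Channels from $\{1,\dots,m\}$ to $\{1,\dots,n\}$ are $m\times n$ row-stochastic matrices; $\mathcal{D}$ is the set of deterministic (0-1) channels, $\mathrm{rank}(D)$ the matrix rank. For a channel $W$, $\Lambda(W)=\{\lambda\text{ probability distribution on }\mathcal{D}: W=\sum_D\lambda_DD\}$, $C_{11}(\lambda)=\sum_D\lambda_D\log_2\mathrm{rank}(D)$, $\underline{C}_{11}(W)=\inf_{\lambda\in\Lambda(W)}C_{11}(\lambda)$, $\overline{C}_{11}(W)=\sup_{\lambda\in\Lambda(W)}C_{11}(\lambda)$. A subset $S\subseteq\mathcal{D}$ is $\mathcal{I}$-minimized (resp. $\mathcal{I}$-maximized) if there is a probability distribution $\lambda$ on $\mathcal{D}$ with $\mathrm{supp}(\lambda)=S$ and $C_{11}(\lambda)=\underline{C}_{11}(W)$ (resp. $=\overline{C}_{11}(W)$), where $W=\sum_D\lambda_DD$. ''Supported on $S$'' means $\lambda_D=0$ for $D\notin S$. *)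

(* Defs.v *)
From mathcomp Require Import all_boot all_order all_algebra.
From mathcomp Require Import classical_sets reals exp.
Set Implicit Arguments. Unset Strict Implicit. Unset Printing Implicit Defensive.
Import Order.TTheory GRing.Theory Num.Theory.
Local Open Scope ring_scope.

Section Channels.
Variables (R : realType) (m n : nat).

(* Deterministic channels {1..m} -> {1..n} are identified with functions
   f : 'I_m -> 'I_n ; the associated 0-1 row-stochastic matrix is detmx f. *)
Definition detch := {ffun 'I_m -> 'I_n}.

Definition detmx (f : detch) : 'M[R]_(m, n) :=
  \matrix_(i < m, j < n) (f i == j)%:R.

Definition log2 (x : R) : R := ln x / ln 2.

Definition is_dist (lam : {ffun detch -> R}) : Prop :=
  (forall D, 0 <= lam D) /\ \sum_(D : detch) lam D = 1.

Definition supp (lam : {ffun detch -> R}) : {set detch} :=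
  [set D | lam D != 0].

Definition mix (lam : {ffun detch -> R}) : 'M[R]_(m, n) :=
  \sum_(D : detch) lam D *: detmx D.

Definition C11 (lam : {ffun detch -> R}) : R :=
  \sum_(D : detch) lam D * log2 (\rank (detmx D))%:R.

Definition Lambda (W : 'M[R]_(m, n)) : set {ffun detch -> R} :=
  [set lam | is_dist lam /\ mix lam = W].

Definition C11_low (W : 'M[R]_(m, n)) : R :=
  inf [set C11 lam | lam in Lambda W].

Definition C11_up (W : 'M[R]_(m, n)) : R :=
  sup [set C11 lam | lam in Lambda W].

Definition I_minimized (S : {set detch}) : Prop :=
  exists lam, is_dist lam /\ supp lam = S /\ C11 lam = C11_low (mix lam).

Definition I_maximized (S : {set detch}) : Prop :=
  exists lam, is_dist lam /\ supp lam = S /\ C11 lam = C11_up (mix lam).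

End Channels.

(* Main.v *)
Require Import Defs.
From mathcomp Require Import all_boot all_order all_algebra.
From mathcomp Require Import classical_sets reals exp.
From mathcomp Require Import ring lra.
Import Order.TTheory GRing.Theory Num.Theory.
Local Open Scope ring_scope.
Set Implicit Arguments. Unset Strict Implicit.

Section Aux.
Variables (R : realType) (m n : nat).
Local Notation F := {ffun detch m n -> R}.

Definition cD (D : detch m n) : R := log2 ((\rank (detmx R D))%:R : R).

Lemma C11E (l : F) : C11 l = \sum_D l D * cD D.
Proof. by []. Qed.

Lemma dist_le1 (l : F) D : is_dist l -> l D <= 1.
Proof.
move=> [h0 h1]; rewrite -h1 (bigD1 D) //= lerDl.
by apply: sumr_ge0 => i _; exact: h0.
Qed.

Lemma mix_lin (a b c : F) k :
  mix [ffun D => a D + k * (b D - c D)] = mix a + k *: (mix b - mix c).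
Proof.
rewrite /mix -sumrB scaler_sumr -big_split; apply: eq_bigr => D _.
by rewrite ffunE scalerDl -scalerA scalerBl scalerBr.
Qed.

Lemma C11_lin (a b c : F) k :
  C11 [ffun D => a D + k * (b D - c D)] = C11 a + k * (C11 b - C11 c).
Proof.
rewrite !C11E -sumrB mulr_sumr -big_split; apply: eq_bigr => D _.
by rewrite ffunE /=; ring.
Qed.

Lemma C11_bound (l : F) : is_dist l ->
  - (\sum_D `|cD D|) <= C11 l <= \sum_D `|cD D|.
Proof.
move=> dl; rewrite -ler_norml C11E.
apply: le_trans (ler_norm_sum _ _ _) _; apply: ler_sum => D _.
rewrite normrM ger0_norm; last by case: dl.
by apply: ler_piMl => //; exact: dist_le1.
Qed.

Lemma core (s : R) (ls lam mu : F) :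
  is_dist ls ->
  (forall nu, is_dist nu -> mix nu = mix ls -> s * C11 ls <= s * C11 nu) ->
  is_dist lam -> (forall D, D \notin supp ls -> lam D = 0) ->
  is_dist mu -> mix mu = mix lam -> s * C11 lam <= s * C11 mu.
Proof.
move=> dls hmin dlam hsupp dmu hmix.
set eps := \big[Order.min/1]_(D in supp ls) ls D.
have eps_gt0 : 0 < eps.
  apply: (big_ind (fun x => 0 < x)) => //.
    by move=> x y hx hy; rewrite lt_min hx hy.
  move=> D; rewrite inE => hD; rewrite lt0r hD; case: dls => h0 _; exact: h0.
have eps_le D : D \in supp ls -> eps <= ls D.
  by move=> hD; apply: bigmin_le_cond.
pose nu := [ffun D => ls D + eps * (mu D - lam D)].
have dnu : is_dist nu.
  split.
    move=> D; rewrite ffunE.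
    case: (boolP (D \in supp ls)) => hD.
      have h1 : eps * lam D <= eps by apply: ler_piMr; [exact: ltW|exact: dist_le1].
      have h2 : 0 <= eps * mu D by apply: mulr_ge0; [exact: ltW|case: dmu].
      have h3 := eps_le D hD.
      rewrite mulrBr; lra.
    move: (hD); rewrite inE negbK => /eqP ->; rewrite (hsupp D hD) subr0 add0r.
    by apply: mulr_ge0; [exact: ltW|case: dmu].
  rewrite /nu; under eq_bigr do rewrite ffunE.
  rewrite big_split /= -mulr_sumr sumrB.
  by case: dls => _ ->; case: dmu => _ ->; case: dlam => _ ->; rewrite subrr mulr0 addr0.
have := hmin nu dnu; rewrite mix_lin hmix subrr scaler0 addr0 => /(_ erefl).
rewrite C11_lin.
have -> : s * (C11 ls + eps * (C11 mu - C11 lam)) =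
          s * C11 ls + eps * (s * C11 mu - s * C11 lam) by ring.
rewrite lerDl pmulr_rge0 // subr_ge0; exact.
Qed.

Definition Eset (W : 'M[R]_(m, n)) : set R := classical_sets.image (Lambda W) (fun l => C11 l).

Lemma Eset_lb W : has_lbound (Eset W).
Proof.
exists (- \sum_D `|cD D|) => x [l hl <-]; case: hl => dl _.
by case/andP: (C11_bound dl).
Qed.

Lemma Eset_ub W : has_ubound (Eset W).
Proof.
exists (\sum_D `|cD D|) => x [l hl <-]; case: hl => dl _.
by case/andP: (C11_bound dl).
Qed.

Lemma uniform_dist (S' : {set detch m n}) : S' != finset.set0 ->
  exists l : F, [/\ is_dist l, supp l = S' &
                 forall D, D \notin S' -> l D = 0].
Proof.
move=> hS; have hk : (0 < #|S'|)%N by rewrite card_gt0.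
have hkR : (#|S'|%:R : R) != 0 by rewrite pnatr_eq0 -lt0n.
exists [ffun D => (D \in S')%:R / #|S'|%:R]; split.
- split.
    by move=> D; rewrite ffunE divr_ge0.
  under eq_bigr do rewrite ffunE.
  rewrite -mulr_suml (bigID (mem S')) /=.
  rewrite [X in _ + X]big1; last by move=> D /negbTE ->.
  rewrite addr0 (eq_bigr (fun _ => 1)); last by move=> D /= ->.
  by rewrite sumr_const divff.
- apply/setP => D; rewrite inE ffunE.
  by case: (D \in S'); rewrite ?mul0r ?eqxx // mul1r invr_eq0.
- by move=> D hD; rewrite ffunE (negbTE hD) mul0r.
Qed.

End Aux.

Theorem proposition3 (R : realType) (m n : nat) (S : {set detch m n}) :
  (I_minimized R S ->
     (forall lam : {ffun detch m n -> R}, is_dist lam ->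
        (forall D, D \notin S -> lam D = 0) -> C11 lam = C11_low (mix lam))
     /\ (forall S' : {set detch m n}, S' \subset S -> S' != finset.set0 ->
           I_minimized R S'))
  /\
  (I_maximized R S ->
     (forall lam : {ffun detch m n -> R}, is_dist lam ->
        (forall D, D \notin S -> lam D = 0) -> C11 lam = C11_up (mix lam))
     /\ (forall S' : {set detch m n}, S' \subset S -> S' != finset.set0 ->
           I_maximized R S')).
Proof.
split.
- move=> [ls [dls [hS hls]]].
  have hmin : forall nu, is_dist nu -> mix nu = mix ls -> 1 * C11 ls <= 1 * C11 nu.
    move=> nu dnu hnu; rewrite !mul1r hls.
    have h := ge_inf (Eset_lb (mix ls)); apply: h; by exists nu => //; split.
  have P1 : forall lam : {ffun detch m n -> R}, is_dist lam ->
        (forall D, D \notin S -> lam D = 0) -> C11 lam = C11_low (mix lam).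
    move=> lam dlam hlam; apply/eqP; rewrite eq_le; apply/andP; split.
      apply: lb_le_inf; first by exists (C11 lam), lam.
      move=> _ [mu [dmu hmu] <-].
      have := core dls hmin dlam _ dmu hmu; rewrite !mul1r; apply.
      by rewrite hS.
    have h := ge_inf (Eset_lb (mix lam)); apply: h; by exists lam.
  split => // S' hsub hne.
  have [l [dl sl hl]] := uniform_dist R hne.
  exists l; split => //; split => //; apply: P1 => // D hD; apply: hl.
  apply/negP => h; move/negP: hD; apply; exact: (fintype.subsetP hsub).
- move=> [ls [dls [hS hls]]].
  have hmin : forall nu, is_dist nu -> mix nu = mix ls -> -1 * C11 ls <= -1 * C11 nu.
    move=> nu dnu hnu; rewrite !mulN1r lerN2 hls.
    have h := ub_le_sup (Eset_ub (mix ls)); apply: h; by exists nu => //; split.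
  have P1 : forall lam : {ffun detch m n -> R}, is_dist lam ->
        (forall D, D \notin S -> lam D = 0) -> C11 lam = C11_up (mix lam).
    move=> lam dlam hlam; apply/eqP; rewrite eq_le; apply/andP; split.
      have h := ub_le_sup (Eset_ub (mix lam)); apply: h; by exists lam.
    apply: ge_sup; first by exists (C11 lam), lam.
    move=> _ [mu [dmu hmu] <-].
    have := core dls hmin dlam _ dmu hmu; rewrite !mulN1r lerN2; apply.
    by rewrite hS.
  split => // S' hsub hne.
  have [l [dl sl hl]] := uniform_dist R hne.
  exists l; split => //; split => //; apply: P1 => // D hD; apply: hl.
  apply/negP => h; move/negP: hD; apply; exact: (fintype.subsetP hsub).
Qed.
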